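(* For the $3\times3$ absorbing game \[ A=\begin{bmatrix}1^* & 1^* & 2^*\\ 1^* & 2^* & 0\\ 2^* & 0 & 1^*\end{bmatrix}, \] let \[ \alpha=-1+\frac13\sqrt[3]{\frac{27}{2}-\frac{3\sqrt{69}}{2}}+\frac{\sqrt[3]{\tfrac12(9+\sqrt{69})}}{\sqrt[3]{9}}\approx0.3247, \] and let $x=(x^1,x^2,x^3)=(\alpha,\,1-2\alpha-\alpha^2,\,\alpha+\alpha^2)\in\Delta(\{1,2,3\})$. Then $x$ is the unique $x\in\Delta(\{1,2,3\})$ satisfying \[ x^1+x^2+2x^3=\frac{x^1+2x^2}{x^1+x^2}=\frac{2x^1+x^3}{x^1+x^3}, \] and for every column $j\in\{1,2,3\}$, $\lim_{\lambda\to0}\gamma_\lambda(x,j)=1+\alpha+\alpha^2$, where $\gamma_\lambda(x,j)$ is the $\lambda$-discounted payoff when Player 1 plays the stationary strategy $x$ and Player 2 plays the pure stationary action $j$. Consequently the limit value is $v=1+\alpha+\alpha^2$. *)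

(* Defs.v *)
From Stdlib Require Export Reals Lra.
From Coquelicot Require Export Coquelicot.
Open Scope R_scope.

(* The 3x3 absorbing game A (indices 0,1,2 stand for rows/columns 1,2,3).
   absorbing i j = true iff entry (i,j) is starred (absorbing);
   payoff i j = the entry: absorbing payoff if starred, stage payoff otherwise. *)
Definition absorbing (i j : nat) : bool :=
  match i, j with
  | 1%nat, 2%nat | 2%nat, 1%nat => false
  | _, _ => true
  end.

Definition payoff (i j : nat) : R :=
  match i, j with
  | 0%nat, 0%nat => 1 | 0%nat, 1%nat => 1 | 0%nat, 2%nat => 2
  | 1%nat, 0%nat => 1 | 1%nat, 1%nat => 2 | 1%nat, 2%nat => 0
  | 2%nat, 0%nat => 2 | 2%nat, 1%nat => 0 | 2%nat, 2%nat => 1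
  | _, _ => 0
  end.

Definition a_ind (i j : nat) : R := if absorbing i j then 1 else 0.

(* A stationary strategy of either player is a mixed action over {0,1,2},
   represented by a function nat -> R; only components 0,1,2 matter. *)
Definition in_simplex (x : nat -> R) : Prop :=
  0 <= x 0%nat /\ 0 <= x 1%nat /\ 0 <= x 2%nat /\ x 0%nat + x 1%nat + x 2%nat = 1.

Definition pure (j : nat) : nat -> R := fun i => if Nat.eqb i j then 1 else 0.

Definition sum3x3 (f : nat -> nat -> R) : R :=
  sum_f_R0 (fun i => sum_f_R0 (fun j => f i j) 2) 2.

Definition pabs (x y : nat -> R) : R := sum3x3 (fun i j => x i * y j * a_ind i j).
Definition Aabs (x y : nat -> R) : R :=
  sum3x3 (fun i j => x i * y j * a_ind i j * payoff i j).
Definition Nnon (x y : nat -> R) : R :=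
  sum3x3 (fun i j => x i * y j * (1 - a_ind i j) * payoff i j).

(* Expected payoff at stage n+1 under stationary (x,y): the play is still in
   the non-absorbing state at stage s+1 with prob q^s (q = 1 - pabs); an
   absorption at stage s+1 yields payoff Aabs-mass forever after. *)
Definition stage_payoff (x y : nat -> R) (n : nat) : R :=
  sum_f_R0 (fun s => (1 - pabs x y) ^ s * Aabs x y) n
  + (1 - pabs x y) ^ n * Nnon x y.

Definition gamma (lam : R) (x y : nat -> R) : R :=
  Series (fun n => lam * (1 - lam) ^ n * stage_payoff x y n).

(* v is the value of the lambda-discounted game (stationary strategies
   suffice in discounted stochastic games, Shapley). *)
Definition is_disc_value (lam v : R) : Prop :=
  (exists x, in_simplex x /\ forall y, in_simplex y -> v <= gamma lam x y) /\
  (exists y, in_simplex y /\ forall x, in_simplex x -> gamma lam x y <= v).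

Definition cbrt (z : R) : R := Rpower z (1/3).

Definition alpha : R :=
  -1 + (1/3) * cbrt (27/2 - 3 * sqrt 69 / 2) + cbrt ((9 + sqrt 69) / 2) / cbrt 9.

Definition char_eqs (x : nat -> R) : Prop :=
  x 0%nat + x 1%nat + 2 * x 2%nat = (x 0%nat + 2 * x 1%nat) / (x 0%nat + x 1%nat) /\
  (x 0%nat + 2 * x 1%nat) / (x 0%nat + x 1%nat)
    = (2 * x 0%nat + x 2%nat) / (x 0%nat + x 2%nat).

Definition xstar : nat -> R := fun i =>
  match i with
  | 0%nat => alpha
  | 1%nat => 1 - 2 * alpha - alpha ^ 2
  | 2%nat => alpha + alpha ^ 2
  | _ => 0
  end.

(* Main.v *)
Require Import Defs.
From Stdlib Require Import Reals Lra Psatz.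
From Coquelicot Require Import Coquelicot.
Open Scope R_scope.

Lemma pabs_eq x y : pabs x y = x 0%nat*y 0%nat + x 0%nat*y 1%nat + x 0%nat*y 2%nat
  + x 1%nat*y 0%nat + x 1%nat*y 1%nat + x 2%nat*y 0%nat + x 2%nat*y 2%nat.
Proof. unfold pabs, sum3x3, a_ind, absorbing; simpl; ring. Qed.
Lemma Aabs_eq x y : Aabs x y = x 0%nat*y 0%nat + x 0%nat*y 1%nat + 2*x 0%nat*y 2%nat
  + x 1%nat*y 0%nat + 2*x 1%nat*y 1%nat + 2*x 2%nat*y 0%nat + x 2%nat*y 2%nat.
Proof. unfold Aabs, sum3x3, a_ind, absorbing, payoff; simpl; ring. Qed.
Lemma Nnon_eq x y : Nnon x y = 0.
Proof. unfold Nnon, sum3x3, a_ind, absorbing, payoff; simpl; ring. Qed.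

Lemma sum_geo q A n : sum_f_R0 (fun s => q^s * A) n * (1-q) = A*(1 - q*q^n).
Proof. induction n; simpl. ring. rewrite Rmult_plus_distr_r, IHn. simpl; ring. Qed.

Lemma gamma_closed lam x y : 0 < lam <= 1 -> 0 < pabs x y <= 1 ->
  gamma lam x y = Aabs x y / (lam + (1-lam)*pabs x y).
Proof.
  intros Hl Hp. unfold gamma.
  set (A := Aabs x y) in *. set (p := pabs x y) in *.
  apply is_series_unique.
  assert (Hs: forall n, stage_payoff x y n = A/p * (1 - (1-p)*(1-p)^n)).
  { intro n; unfold stage_payoff; rewrite Nnon_eq. fold p A.
    assert (E := sum_geo (1-p) A n).
    replace (sum_f_R0 (fun s => (1 - p) ^ s * A) n) with
      (sum_f_R0 (fun s => (1 - p) ^ s * A) n * (1 - (1-p)) / p) by (field; lra).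
    rewrite E. field; lra. }
  assert (G1 : is_series (fun n => (1-lam)^n) (/(1-(1-lam)))).
  { apply is_series_geom. unfold Rabs; destruct Rcase_abs; lra. }
  assert (G2 : is_series (fun n => ((1-lam)*(1-p))^n) (/(1-(1-lam)*(1-p)))).
  { apply is_series_geom. assert (0 <= (1-lam)*(1-p) < 1) by nra.
    unfold Rabs; destruct Rcase_abs; lra. }
  pose proof (is_series_minus _ _ _ _ (is_series_scal (A/p*lam) _ _ G1)
       (is_series_scal (A/p*lam*(1-p)) _ _ G2)) as H.
  unfold plus, opp, scal in H; simpl in H; unfold mult in H; simpl in H.
  eapply is_series_ext in H.
  - replace (A / (lam + (1 - lam) * p)) with
      (A / p * lam * / (1 - (1 - lam)) + - (A / p * lam * (1 - p) * / (1 - (1 - lam) * (1 - p)))).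
    exact H.
    field. repeat split; nra.
  - intro n. simpl. rewrite Hs. rewrite Rpow_mult_distr. ring.
Qed.

Lemma cbrt_pos z : 0 < cbrt z.
Proof. unfold cbrt, Rpower. apply exp_pos. Qed.
Lemma cbrt_cube z : 0 < z -> cbrt z ^ 3 = z.
Proof.
  intro Hz. unfold cbrt. rewrite <- Rpower_pow by (unfold Rpower; apply exp_pos).
  rewrite Rpower_mult. replace (1/3 * INR 3) with 1 by (simpl; field). apply Rpower_1; exact Hz.
Qed.

Lemma alpha_cubic : alpha^3 + 3*alpha^2 + 2*alpha - 1 = 0 /\ 0 < alpha < 1/3.
Proof.
  set (s := sqrt 69).
  assert (Hs0 : 0 <= s) by apply sqrt_pos.
  assert (Hs2 : s*s = 69) by (apply sqrt_sqrt; lra).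
  assert (Hs9 : s < 9) by nra.
  set (u := 1/3 * cbrt (27/2 - 3*s/2)).
  set (w := cbrt ((9+s)/2) / cbrt 9).
  assert (Hu3 : u^3 = (27/2 - 3*s/2)/27).
  { unfold u. rewrite Rpow_mult_distr, cbrt_cube by lra. field. }
  assert (Hw3 : w^3 = ((9+s)/2)/9).
  { unfold w. unfold Rdiv at 1. rewrite Rpow_mult_distr, cbrt_cube by lra.
    rewrite pow_inv, cbrt_cube by lra. field. }
  assert (Hu : 0 < u) by (unfold u; pose proof (cbrt_pos (27/2 - 3*s/2)); lra).
  assert (Hw : 0 < w) by (unfold w; pose proof (cbrt_pos ((9+s)/2)); pose proof (cbrt_pos 9);
     apply Rdiv_lt_0_compat; lra).
  assert (Huw3 : (u*w)^3 = 1/27).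
  { rewrite Rpow_mult_distr, Hu3, Hw3. field_simplify. nra. }
  assert (Huw : u*w = 1/3).
  { set (z := u*w) in *. assert (0 < z) by (unfold z; nra).
    assert ((z - 1/3)*(z*z + z/3 + 1/9) = 0) by (simpl in Huw3; nra).
    apply Rmult_integral in H0; destruct H0; nra. }
  assert (Ha : alpha = u + w - 1) by (unfold alpha, u, w, s; ring).
  assert (Ht : (u+w)^3 = 1 + (u+w)).
  { replace ((u+w)^3) with (u^3 + w^3 + 3*(u*w)*(u+w)) by ring.
    rewrite Hu3, Hw3, Huw. field. }
  rewrite Ha. set (t := u+w) in *.
  assert (0 < t) by (unfold t; lra).
  split. { replace ((t-1)^3 + 3*(t-1)^2 + 2*(t-1) - 1) with (t^3 - t - 1) by ring. lra. }
  simpl in Ht. split; nra.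
Qed.

Lemma lim_lemma (f : R -> R) l K d : 0 < K -> 0 < d ->
  (forall lam, 0 < lam < d -> Rabs (f lam - l) <= K*lam) ->
  filterlim f (at_right 0) (locally l).
Proof.
  intros HK Hd H. apply filterlim_locally. intro eps.
  assert (He : 0 < Rmin d (eps/(2*K))).
  { apply Rmin_pos; auto. apply Rdiv_lt_0_compat; [apply cond_pos| lra]. }
  exists (mkposreal _ He). intros y Hy Hy0. simpl in Hy.
  unfold ball in *; simpl in *; unfold AbsRing_ball, abs, minus, plus, opp in *; simpl in *.
  replace (y + - 0) with y in Hy by ring. rewrite Rabs_pos_eq in Hy by lra.
  assert (y < d) by (eapply Rlt_le_trans; [exact Hy| apply Rmin_l]).
  assert (y < eps/(2*K)) by (eapply Rlt_le_trans; [exact Hy| apply Rmin_r]).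
  specialize (H y (conj Hy0 H0)).
  assert (K*y < eps/2).
  { apply Rmult_lt_compat_l with (r:=K) in H1; auto.
    replace (K * (eps/(2*K))) with (eps/2) in H1 by (field; lra). lra. }
  pose proof (cond_pos eps). unfold Rminus in H. lra.
Qed.

Lemma err_bound T a p lam : 0 < T -> 0 < a -> a <= p <= 1 -> 0 < lam < 1 ->
  0 <= T - T*p/(lam+(1-lam)*p) <= T/a*lam.
Proof.
  intros HT Ha Hp Hl.
  assert (HD0 : lam+(1-lam)*p <> 0) by nra.
  replace (T - T*p/(lam+(1-lam)*p)) with (T*lam*(1-p)/(lam+(1-lam)*p)) by (field; exact HD0).
  assert (Hg : T*lam*(1-p)/(lam+(1-lam)*p)*(lam+(1-lam)*p) = T*lam*(1-p)) by (field; exact HD0).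
  set (D := lam+(1-lam)*p) in *.
  assert (HD : p <= D) by (unfold D; nra).
  set (g := T*lam*(1-p)/D) in *.
  assert (0 <= g) by (unfold g, Rdiv; apply Rmult_le_pos; [apply Rmult_le_pos; [apply Rmult_le_pos|]; lra | left; apply Rinv_0_lt_compat; lra]).
  clearbody g D.
  split; auto.
  assert (g*a <= g*D) by (apply Rmult_le_compat_l; lra).
  assert (0 <= T*lam*p) by (apply Rmult_le_pos; [apply Rmult_le_pos|]; lra).
  assert (g*a <= T*lam) by nra.
  replace (T/a*lam) with ((T*lam)/a) by (field; lra).
  apply Rmult_le_reg_r with a; auto. replace (T*lam/a*a) with (T*lam) by (field; lra). lra.
Qed.

Definition T := 1 + alpha + alpha^2.

Lemma xfacts : 0 < alpha < 1/3 /\ 0 < 1 - 2*alpha - alpha^2 /\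
  alpha + (1 - 2*alpha - alpha^2) + 2*(alpha+alpha^2) = T /\
  alpha + 2*(1 - 2*alpha - alpha^2) = T * (alpha + (1 - 2*alpha - alpha^2)) /\
  2*alpha + (alpha+alpha^2) = T * (alpha + (alpha+alpha^2)).
Proof.
  destruct alpha_cubic as [Hc Hb]. unfold T.
  split; [exact Hb|]. split; [nra|]. split; [ring|]. split.
  - assert (E : alpha + 2*(1 - 2*alpha - alpha^2) - (1 + alpha + alpha^2) * (alpha + (1 - 2*alpha - alpha^2))
         = (alpha - 1)*(alpha^3 + 3*alpha^2 + 2*alpha - 1)) by ring.
    rewrite Hc, Rmult_0_r in E. lra.
  - assert (E : 2*alpha + (alpha+alpha^2) - (1 + alpha + alpha^2) * (alpha + (alpha+alpha^2))
         = - alpha * (alpha^3 + 3*alpha^2 + 2*alpha - 1)) by ring.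
    rewrite Hc, Rmult_0_r in E. lra.
Qed.

Lemma L1 y : in_simplex y ->
  Aabs xstar y = T * pabs xstar y /\ alpha <= pabs xstar y <= 1.
Proof.
  intros (H0 & H1 & H2 & Hs).
  destruct xfacts as (Ha & He1 & F0 & F1 & F2).
  rewrite Aabs_eq, pabs_eq. change (xstar 0%nat) with alpha in *; change (xstar 1%nat) with (1 - 2*alpha - alpha^2) in *; change (xstar 2%nat) with (alpha+alpha^2) in *.
  split.
  - replace (T * (alpha * y 0%nat + alpha * y 1%nat + alpha * y 2%nat +
     (1 - 2 * alpha - alpha ^ 2) * y 0%nat + (1 - 2 * alpha - alpha ^ 2) * y 1%nat +
     (alpha + alpha ^ 2) * y 0%nat + (alpha + alpha ^ 2) * y 2%nat))
    with (y 0%nat * (T*(alpha + (1 - 2*alpha - alpha^2) + (alpha+alpha^2)))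
        + y 1%nat * (T * (alpha + (1 - 2*alpha - alpha^2)))
        + y 2%nat * (T * (alpha + (alpha+alpha^2)))) by ring.
    rewrite <- F1, <- F2. replace (alpha + (1 - 2*alpha - alpha^2) + (alpha+alpha^2)) with 1 by ring.
    rewrite Rmult_1_r, <- F0. ring.
  - split; nra.
Qed.

Lemma L2 x : in_simplex x ->
  Aabs x xstar = T * pabs x xstar /\ alpha <= pabs x xstar <= 1.
Proof.
  intro H. destruct (L1 x H) as [A1 A2].
  replace (Aabs x xstar) with (Aabs xstar x) by (rewrite !Aabs_eq; ring).
  replace (pabs x xstar) with (pabs xstar x) by (rewrite !pabs_eq; ring).
  auto.
Qed.

Lemma T_pos : 0 < T.
Proof. destruct xfacts as (Ha & _). unfold T. nra. Qed.

Lemma xstar_simplex : in_simplex xstar.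
Proof. destruct xfacts as (Ha & He1 & _). unfold in_simplex; simpl. repeat split; nra. Qed.

Lemma pure_simplex j : (j < 3)%nat -> in_simplex (pure j).
Proof.
  intro Hj. unfold in_simplex, pure.
  destruct j as [|[|[|j]]]; simpl; try lia; repeat split; lra.
Qed.

Theorem mainTheorem5 :
  (in_simplex xstar /\ char_eqs xstar) /\
  (forall y : nat -> R, in_simplex y -> char_eqs y ->
     y 0%nat = xstar 0%nat /\ y 1%nat = xstar 1%nat /\ y 2%nat = xstar 2%nat) /\
  (forall j : nat, (j < 3)%nat ->
     filterlim (fun lam => gamma lam xstar (pure j)) (at_right 0)
               (locally (1 + alpha + alpha ^ 2))) /\
  (forall v : R -> R, (forall lam, 0 < lam <= 1 -> is_disc_value lam (v lam)) ->
     filterlim v (at_right 0) (locally (1 + alpha + alpha ^ 2))).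
Proof.
  destruct xfacts as (Ha & He1 & F0 & F1 & F2).
  pose proof T_pos as HT.
  fold T.
  split; [split|split; [|split]].
  - exact xstar_simplex.
  - unfold char_eqs; change (xstar 0%nat) with alpha in *; change (xstar 1%nat) with (1 - 2*alpha - alpha^2) in *; change (xstar 2%nat) with (alpha+alpha^2) in *. rewrite F1, F2, F0.
    split; field; nra.
  - intros y (H0 & H1 & H2 & Hs) [E1 E2]. change (xstar 0%nat) with alpha in *; change (xstar 1%nat) with (1 - 2*alpha - alpha^2) in *; change (xstar 2%nat) with (alpha+alpha^2) in *.
    set (p := y 0%nat) in *. set (q := y 1%nat) in *. set (r := y 2%nat) in *.
    assert (Hpq : p + q <> 0).
    { intro Z. rewrite Z in E1. unfold Rdiv in E1. rewrite Rinv_0, Rmult_0_r in E1. lra. }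
    assert (Hpr : p + r <> 0).
    { intro Z. rewrite Z in E2. rewrite E2 in E1. unfold Rdiv in E1. rewrite Rinv_0, Rmult_0_r in E1.
      lra. }
    rewrite <- E1 in E2.
    apply (f_equal (fun z => z * (p+q))) in E1.
    apply (f_equal (fun z => z * (p+r))) in E2.
    unfold Rdiv in E1, E2. rewrite Rmult_assoc, Rinv_l, Rmult_1_r in E1, E2 by auto.
    assert (Hq : q = r - r*r) by nra.
    assert (Hr : r*r*r - 2*r*r + 3*r - 1 = 0) by nra.
    set (a := alpha) in *. set (rs := a + a^2).
    assert (Hrs : rs*rs*rs - 2*rs*rs + 3*rs - 1 = 0).
    { destruct alpha_cubic as [Hc _]. fold a in Hc.
      assert (E : rs*rs*rs - 2*rs*rs + 3*rs - 1 = (a^3 - a + 1) * (a^3 + 3*a^2 + 2*a - 1))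
        by (unfold rs; ring).
      rewrite Hc, Rmult_0_r in E. exact E. }
    assert (Hrr : r = rs).
    { assert (E : (r - rs) * (r*r + r*rs + rs*rs - 2*(r+rs) + 3) = 0) by nra.
      apply Rmult_integral in E. destruct E as [E|E]; [lra|].
      nra. }
    assert (q = 1 - 2*a - a^2).
    { destruct alpha_cubic as [Hc _]. fold a in Hc. rewrite Hq, Hrr.
      assert (E : rs - rs*rs - (1 - 2*a - a^2) = (1 - a) * (a^3 + 3*a^2 + 2*a - 1)) by (unfold rs; ring).
      rewrite Hc, Rmult_0_r in E. lra. }
    unfold rs in *. repeat split; lra.
  - intros j Hj.
    destruct (L1 _ (pure_simplex j Hj)) as [EA Ep].
    apply lim_lemma with (K := T/alpha) (d := 1).
    + apply Rdiv_lt_0_compat; lra.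
    + lra.
    + intros lam Hl. rewrite gamma_closed by lra. rewrite EA.
      pose proof (err_bound T alpha _ lam HT (proj1 Ha) Ep Hl).
      rewrite Rabs_minus_sym, Rabs_pos_eq; lra.
  - intros v Hv.
    apply lim_lemma with (K := T/alpha) (d := 1).
    + apply Rdiv_lt_0_compat; lra.
    + lra.
    + intros lam Hl.
      destruct (Hv lam ltac:(lra)) as [[x [Hx Hxv]] [y [Hy Hyv]]].
      specialize (Hxv xstar xstar_simplex). specialize (Hyv xstar xstar_simplex).
      destruct (L2 x Hx) as [EA2 Ep2]. destruct (L1 y Hy) as [EA1 Ep1].
      rewrite gamma_closed in Hxv, Hyv by lra.
      rewrite EA2 in Hxv. rewrite EA1 in Hyv.
      pose proof (err_bound T alpha _ lam HT (proj1 Ha) Ep1 Hl).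
      pose proof (err_bound T alpha _ lam HT (proj1 Ha) Ep2 Hl).
      rewrite Rabs_minus_sym, Rabs_pos_eq; lra.
Qed.
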